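(* Let $Z:\Sigma\to\widetilde{\Lambda^C(Y)}$ be a section of $\sigma^C$, given in the local coordinates described in the context by $(t_1,t_2)\mapsto (t_1,t_2,q^a_1,q^a_2,P^a_1,P^a_2)$, and let $h$ be a complex-regularized Hamiltonian section given locally by $p=-H(t_1,t_2,q^a_1,q^a_2,P^a_1,P^a_2)$. Then $Z$ is a solution of $h$ (on this coordinate chart) if and only if, for all $a=1,\dots,n$, \begin{align*} \frac{\partial H}{\partial q^a_1} &= -\partial_1 P^a_1 + \partial_2 P^a_2, & \frac{\partial H}{\partial q^a_2} &= -\partial_1 P^a_2 - \partial_2 P^a_1,\\ \frac{\partial H}{\partial P^a_1} &= \partial_1 q^a_1 + \partial_2 q^a_2, & \frac{\partial H}{\partial P^a_2} &= \partial_1 q^a_2 - \partial_2 q^a_1, \end{align*} where $\partial_k=\partial/\partial t_k$ and the left-hand sides are evaluated at $Z(t)$.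
   Context: Let $(\Sigma,j)$ be a Riemann surface and $\pi:(Y,i)\to(\Sigma,j)$ a holomorphic fiber bundle (i.e. $(Y,i)$ is a complex manifold, $d\pi\circ i=j\circ d\pi$, and $Y$ is locally biholomorphic to a product). The extended multimomentum bundle is $\Lambda^2_2(Y)=\{\lambda\in\Lambda^2T^*Y:\ \lambda(u,v)=0\text{ for all }u,v\in\ker d\pi\}$ with projection $\kappa:\Lambda^2_2(Y)\to Y$, and $\Lambda^C(Y)=\{\lambda\in\Lambda^2_2(Y):\lambda(i\cdot,i\cdot)=\lambda\}$. The tautological 2-form $\Theta$ on $\Lambda^C(Y)$ is $\Theta_\lambda(X_1,X_2)=\lambda(d\kappa X_1,d\kappa X_2)$, and $\Omega=d\Theta$. One has $\pi^*\Lambda^2(\Sigma)\subseteq\Lambda^C(Y)$; set $\widetilde{\Lambda^C(Y)}=\Lambda^C(Y)/\pi^*\Lambda^2(\Sigma)$ (fiberwise quotient over $Y$), with quotient map $\mu^C:\Lambda^C(Y)\to\widetilde{\Lambda^C(Y)}$ and projection $\sigma^C:\widetilde{\Lambda^C(Y)}\to\Sigma$. A complex-regularized Hamiltonian section is a smooth section $h$ of $\mu^C$; put $\Theta^h=h^*\Theta$, $\Omega^h=h^*\Omega$. A section $Z$ of $\sigma^C$ is a solution of $h$ if $Z^*(X\lrcorner\Omega^h)=0$ for all vector fields $X$ on $\widetilde{\Lambda^C(Y)}$. Local coordinates: choose local coordinates $(t_1,t_2)$ on $\Sigma$ and $(t_1,t_2,q^a_1,q^a_2)_{a=1}^n$ on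 $Y$ with $j\partial_{t_1}=\partial_{t_2}$ and $i\,\partial_{q^a_1}=\partial_{q^a_2}$. Every element of $\Lambda^C(Y)$ over such a chart is uniquely of the form $\lambda=p\,dt_1\wedge dt_2+\sum_a(P^a_1dq^a_1+P^a_2dq^a_2)\wedge dt_2-\sum_a(P^a_1dq^a_2-P^a_2dq^a_1)\wedge dt_1$, giving coordinates $(t_1,t_2,q^a_1,q^a_2,P^a_1,P^a_2,p)$ on $\Lambda^C(Y)$ and $(t_1,t_2,q^a_1,q^a_2,P^a_1,P^a_2)$ on $\widetilde{\Lambda^C(Y)}$. A Hamiltonian section is then locally of the form $p=-H(t,q,P)$ for a smooth local function $H$. *)

(* Defs.v *)
From HB Require Import structures.
From mathcomp Require Import all_boot all_order all_algebra.
From mathcomp Require Import all_classical all_reals all_analysis.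
Set Implicit Arguments. Unset Strict Implicit. Unset Printing Implicit Defensive.
Import Order.TTheory GRing.Theory Num.Theory.
Import numFieldNormedType.Exports.
Local Open Scope classical_set_scope.
Local Open Scope ring_scope.

Fixpoint Ck {R : realType} {V W : normedModType R} (k : nat) (A : set V)
  (f : V -> W) : Prop :=
  match k with
  | 0%N => forall x, A x -> {for x, continuous f}
  | k'.+1 => (forall x, A x -> differentiable f x) /\
             (forall v : V, Ck k' A (fun x => 'D_v f x))
  end.

Definition smooth_on {R : realType} {V W : normedModType R} (A : set V)
  (f : V -> W) : Prop := forall k, Ck k A f.

(* Coordinates on Sigma: t = (t_1,t_2) = (t 0 0, t 0 1). *)
Definition i0 {m} : 'I_m.+1 := ord0.
Definition i1 {m} : 'I_m.+2 := inord 1.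
Definition i2 {m} : 'I_m.+3 := inord 2.
Definition i3 {m} : 'I_m.+4 := inord 3.

(* Chart of Y: (t, q) with q : 'M_(2,n), row 0 = q_1, row 1 = q_2. *)
Definition Ypt (R : realType) (n : nat) := ('rV[R]_2 * 'M[R]_(2, n))%type.

(* Chart of tilde Lambda^C(Y): (t, M) with M : 'M_(4,n), rows
   0,1,2,3 = q_1, q_2, P_1, P_2. *)
Definition Pt (R : realType) (n : nat) := ('rV[R]_2 * 'M[R]_(4, n))%type.

Definition wedge {T : Type} {R : realType} (al be : T -> R) (u v : T) : R :=
  al u * be v - al v * be u.

Section Lam.
Context {R : realType} {n : nat}.
Definition dt1Y (u : Ypt R n) : R := u.1 i0 i0.
Definition dt2Y (u : Ypt R n) : R := u.1 i0 i1.
Definition dq1Y (a : 'I_n) (u : Ypt R n) : R := u.2 i0 a.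
Definition dq2Y (a : 'I_n) (u : Ypt R n) : R := u.2 i1 a.

Definition lamY (p : R) (P1 P2 : 'I_n -> R) (u v : Ypt R n) : R :=
  p * wedge dt1Y dt2Y u v
  + \sum_(a < n) wedge (fun w => P1 a * dq1Y a w + P2 a * dq2Y a w) dt2Y u v
  - \sum_(a < n) wedge (fun w => P1 a * dq2Y a w - P2 a * dq1Y a w) dt1Y u v.
End Lam.

Section Forms.
Context {R : realType} {n : nat}.

(* d(kappa o h) : tangent vector of tilde Lambda^C chart -> tangent vector of Y
   (kappa o h is the linear projection (t,q,P) |-> (t,q)). *)
Definition dkh (w : Pt R n) : Ypt R n :=
  (w.1, \matrix_(i < 2, a < n) w.2 (widen_ord (isT : (2 <= 4)%N) i) a).

(* Theta^h = h^* Theta, where the section h is p = - H (t,q,P):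
   Theta^h_x(u,v) = lambda_{h(x)}(d(kappa o h) u, d(kappa o h) v). *)
Definition Thetah (H : Pt R n -> R) (x u v : Pt R n) : R :=
  lamY (- H x) (fun a => x.2 i2 a) (fun a => x.2 i3 a) (dkh u) (dkh v).

(* exterior derivative of a 2-form field on a vector space (constant vector fields) *)
Definition dform2 {V : normedModType R} (om : V -> V -> V -> R) (x u v w : V) : R :=
  'D_u (fun y => om y v w) x - 'D_v (fun y => om y u w) x
  + 'D_w (fun y => om y u v) x.

Definition Omegah (H : Pt R n -> R) := dform2 (Thetah H).

Definition interior {V : Type} (X : V -> V) (om : V -> V -> V -> V -> R) (x u v : V) : R :=
  om x (X x) u v.

Definition pullback2 {V : normedModType R} (Z : 'rV[R]_2 -> V)
  (al : V -> V -> V -> R) (t e1 e2 : 'rV[R]_2) : R :=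
  al (Z t) ('D_e1 Z t) ('D_e2 Z t).

Definition Zsec (Q : 'rV[R]_2 -> 'M[R]_(4, n)) (t : 'rV[R]_2) : Pt R n := (t, Q t).

(* Z is a solution of h on the chart (domain U of Sigma, domain W of tilde
   Lambda^C): Z^*(X _| Omega^h) = 0 for every smooth vector field X on W. *)
Definition is_solution_on (W : set (Pt R n)) (U : set 'rV[R]_2)
  (H : Pt R n -> R) (Z : 'rV[R]_2 -> Pt R n) : Prop :=
  forall X : Pt R n -> Pt R n, smooth_on W X ->
  forall t, U t -> forall e1 e2 : 'rV[R]_2,
    pullback2 Z (interior X (Omegah H)) t e1 e2 = 0.

Definition e_t1 : 'rV[R]_2 := delta_mx i0 i0.
Definition e_t2 : 'rV[R]_2 := delta_mx i0 i1.
Definition e_fib (i : 'I_4) (a : 'I_n) : Pt R n := (0, delta_mx i a).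

Definition Qc (Q : 'rV[R]_2 -> 'M[R]_(4, n)) (i : 'I_4) (a : 'I_n) :
  'rV[R]_2 -> R := fun s => Q s i a.
End Forms.

(* Main.v *)
Require Import Defs.
From HB Require Import structures.
From mathcomp Require Import all_boot all_order all_algebra.
From mathcomp Require Import all_classical all_reals all_analysis.
From mathcomp Require Import ring.
Import Order.TTheory GRing.Theory Num.Theory.
Import numFieldNormedType.Exports.
Local Open Scope classical_set_scope.
Local Open Scope ring_scope.

Section H.
Context {R : realType} {n : nat}.

Lemma is_derive_linlike (V : normedModType R) (f : V -> R) x u c :
  (forall h, f (h *: u + x) = f x + h * c) -> is_derive x u f c.
Proof.
move=> hf.
have E : {near 0^', (fun h : R => c) =1 (fun h => h^-1 *: ((f \o shift x) (h *: u) - f x))}.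
  near=> h; rewrite /= hf addrAC subrr add0r /GRing.scale /= mulrA mulVf ?mul1r //.
  by near: h; exact: nbhs_dnbhs_neq.
have cv : (fun h => h^-1 *: ((f \o shift x) (h *: u) - f x)) @ 0^' --> c.
  by apply: cvg_trans (near_eq_cvg E) _; exact: cvg_cst.
apply: DeriveDef; first by apply/cvg_ex; exists c.
exact: cvg_lim.
Unshelve. all: by end_near. Qed.

Lemma lamY_split p (P1 P2 : 'I_n -> R) (u v : Ypt R n) :
  lamY p P1 P2 u v = p * wedge dt1Y dt2Y u v + lamY 0 P1 P2 u v.
Proof. by rewrite /lamY mul0r add0r addrA. Qed.

Lemma lamY_lin (P1 P2 P1' P2' : 'I_n -> R) h (u v : Ypt R n) :
  lamY 0 (fun a => P1 a + h * P1' a) (fun a => P2 a + h * P2' a) u v =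
  lamY 0 P1 P2 u v + h * lamY 0 P1' P2' u v.
Proof.
rewrite /lamY !mul0r !add0r -!sumrB mulr_sumr -big_split /=.
by apply: eq_bigr => a _; rewrite /wedge; ring.
Qed.

Lemma pt_addE (a b : Pt R n) : (a + b).2 = a.2 + b.2. Proof. by []. Qed.
Lemma pt_subE (a b : Pt R n) : (a - b).2 = a.2 - b.2. Proof. by []. Qed.
Lemma pt_scaleE h (a : Pt R n) : (h *: a).2 = h *: a.2. Proof. by []. Qed.
Lemma pt_addE1 (a b : Pt R n) : (a + b).1 = a.1 + b.1. Proof. by []. Qed.
Lemma pt_scaleE1 h (a : Pt R n) : (h *: a).1 = h *: a.1. Proof. by []. Qed.

Lemma dTheta (H : Pt R n -> R) (x u v w : Pt R n) : derivable H x u ->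
  'D_u (fun y => Thetah H y v w) x =
  - 'D_u H x * wedge dt1Y dt2Y (dkh v) (dkh w)
  + lamY 0 (fun a => u.2 i2 a) (fun a => u.2 i3 a) (dkh v) (dkh w).
Proof.
move=> dH.
set c := wedge dt1Y dt2Y (dkh v) (dkh w).
set L := fun y : Pt R n => lamY 0 (fun a => y.2 i2 a) (fun a => y.2 i3 a) (dkh v) (dkh w).
have -> : (fun y => Thetah H y v w) = ((- c) \*: H) + L.
  apply/funext => y; rewrite /Thetah lamY_split /= -[RHS]/((- c) *: H y + L y) /L /c.
  by congr (_ + _); rewrite mulNr scaleNr; congr (- _); exact: mulrC.
have dL : is_derive x u L (L u).
  apply: is_derive_linlike => h; rewrite /L -lamY_lin; congr lamY; apply/funext => a;
  by rewrite pt_addE pt_scaleE !mxE addrC.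
have D : is_derive x u ((- c) \*: H + L) ((- c) *: 'D_u H x + L u).
  by apply: is_deriveD => //; apply: is_deriveZ; exact: derivableP.
rewrite (derive_val (is_derive := D)) /GRing.scale /= /L; ring.
Qed.

Lemma pair_sum (I : Type) (r : seq I) (P : pred I) (F : I -> 'M[R]_(4, n)) :
  ((0 : 'rV[R]_2), \sum_(i <- r | P i) F i) = \sum_(i <- r | P i) ((0 : 'rV[R]_2), F i) :> Pt R n.
Proof. by elim/big_rec2 : _ => // i y1 y2 _ <-; rewrite -[RHS]/(0 + 0, F i + y2) addr0. Qed.

Lemma sum4 (F : 'I_4 -> R) : \sum_(i < 4) F i = F i0 + F i1 + F i2 + F i3.
Proof.
rewrite !big_ord_recr big_ord0 /= add0r.
have E : forall (j : 'I_4) k, (k < 4)%N -> val j = k -> j = inord k.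
  by move=> j k hk hj; apply/val_inj; rewrite /= inordK // hj.
by congr (_ + _ + _ + _); congr F; apply/val_inj; rewrite /= ?inordK.
Qed.

Lemma gvert (g : {linear Pt R n -> R}) (V : Pt R n) : V.1 = 0 ->
  g V = \sum_(a < n) (V.2 i0 a * g (e_fib i0 a) + V.2 i1 a * g (e_fib i1 a)
                      + V.2 i2 a * g (e_fib i2 a) + V.2 i3 a * g (e_fib i3 a)).
Proof.
case: V => v1 v2 /= ->.
have -> : ((0 : 'rV[R]_2), v2) = \sum_(i < 4) \sum_(a < n) v2 i a *: e_fib i a.
  rewrite {1}(matrix_sum_delta v2) pair_sum; apply: eq_bigr => i _.
  rewrite pair_sum; apply: eq_bigr => a _.
  by rewrite /e_fib /= -[RHS]/(_ *: 0, _ *: _) scaler0.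
rewrite linear_sum (eq_bigr (fun i => \sum_(a < n) g (v2 i a *: e_fib i a))); last by move=> i _; rewrite linear_sum.
rewrite exchange_big /=; apply: eq_bigr => a _.
by rewrite sum4 !linearZ.
Qed.

Definition wt (v w : Pt R n) : R := v.1 i0 i0 * w.1 i0 i1 - w.1 i0 i0 * v.1 i0 i1.

Lemma sc (c d : R) : c *: d = c * d. Proof. by []. Qed.

Lemma Omega_expand (H : Pt R n -> R) (x xi A B : Pt R n) : differentiable H x ->
  Omegah H x xi A B = - 'd H x (wt A B *: xi - wt xi B *: A + wt xi A *: B)
   + lamY 0 (fun a => xi.2 i2 a) (fun a => xi.2 i3 a) (dkh A) (dkh B)
   - lamY 0 (fun a => A.2 i2 a) (fun a => A.2 i3 a) (dkh xi) (dkh B)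
   + lamY 0 (fun a => B.2 i2 a) (fun a => B.2 i3 a) (dkh xi) (dkh A).
Proof.
move=> dH; rewrite /Omegah /dform2 !dTheta; try exact: diff_derivable.
have EV : 'd H x (wt A B *: xi - wt xi B *: A + wt xi A *: B) =
  wt A B * 'd H x xi - wt xi B * 'd H x A + wt xi A * 'd H x B.
  by rewrite linearD linearB !linearZ.
rewrite !deriveE // EV.
rewrite -[wedge dt1Y dt2Y (dkh A) (dkh B)]/(wt A B).
rewrite -[wedge dt1Y dt2Y (dkh xi) (dkh B)]/(wt xi B).
rewrite -[wedge dt1Y dt2Y (dkh xi) (dkh A)]/(wt xi A).
ring.
Qed.

Lemma ord2_cases (j : 'I_2) : j = i0 \/ j = i1.
Proof.
case: j => [[|[|k]] hk]; [left|right|by []]; apply/val_inj => //=.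
by rewrite inordK.
Qed.

Lemma widen0 : widen_ord (isT : (2 <= 4)%N) i0 = i0. Proof. by apply/val_inj. Qed.
Lemma widen1 : widen_ord (isT : (2 <= 4)%N) i1 = i1.
Proof. by apply/val_inj; rewrite /= !inordK. Qed.

Lemma key (H : Pt R n -> R) (x xi : Pt R n) (e1 e2 : 'rV[R]_2) (D1 D2 : 'M[R]_(4, n)) :
  differentiable H x ->
  let A : Pt R n := (e1, e1 i0 i0 *: D1 + e1 i0 i1 *: D2) in
  let B : Pt R n := (e2, e2 i0 i0 *: D1 + e2 i0 i1 *: D2) in
  let xp i a := xi.2 i a - xi.1 i0 i0 * D1 i a - xi.1 i0 i1 * D2 i a in
  let hh i a := 'D_(e_fib i a) H x in
  Omegah H x xi A B =
  (e1 i0 i0 * e2 i0 i1 - e2 i0 i0 * e1 i0 i1) *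
  \sum_(a < n) (xp i0 a * (- D1 i2 a + D2 i3 a - hh i0 a)
              + xp i1 a * (- D1 i3 a - D2 i2 a - hh i1 a)
              + xp i2 a * (D1 i0 a + D2 i1 a - hh i2 a)
              + xp i3 a * (D1 i1 a - D2 i0 a - hh i3 a)).
Proof.
move=> dH A B xp hh.
rewrite Omega_expand // gvert; last first.
  apply/rowP => j; rewrite /wt /= !mxE /=.
  by case: (ord2_cases j) => ->; ring.
rewrite /lamY !mul0r !add0r.
rewrite -!sumrB -sumrN -big_split -sumrB -big_split mulr_sumr /=.
apply: eq_bigr => a _; rewrite /hh !deriveE //.
rewrite /wedge /dq1Y /dq2Y /dt1Y /dt2Y /dkh /xp /wt /A /B /= !mxE widen0 widen1.
ring.
Qed.

Lemma n10 : (i1 : 'I_4) != i0. Proof. by rewrite -val_eqE /= ?inordK. Qed.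
Lemma n20 : (i2 : 'I_4) != i0. Proof. by rewrite -val_eqE /= ?inordK. Qed.
Lemma n30 : (i3 : 'I_4) != i0. Proof. by rewrite -val_eqE /= ?inordK. Qed.
Lemma n21 : (i2 : 'I_4) != i1. Proof. by rewrite -val_eqE /= ?inordK. Qed.
Lemma n31 : (i3 : 'I_4) != i1. Proof. by rewrite -val_eqE /= ?inordK. Qed.
Lemma n32 : (i3 : 'I_4) != i2. Proof. by rewrite -val_eqE /= ?inordK. Qed.
Lemma m10 : (i1 : 'I_2) != i0. Proof. by rewrite -val_eqE /= ?inordK. Qed.

Lemma ord4_cases (j : 'I_4) : [\/ j = i0, j = i1, j = i2 | j = i3].
Proof.
case: j => [[|[|[|[|k]]]] hk]; [constructor 1|constructor 2|constructor 3|constructor 4|by []];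
  apply/val_inj => //=; by rewrite inordK.
Qed.

Definition Rr (D1 D2 : 'M[R]_(4, n)) (i : 'I_4) (a : 'I_n) : R :=
  if i == i0 then - D1 i2 a + D2 i3 a else
  if i == i1 then - D1 i3 a - D2 i2 a else
  if i == i2 then D1 i0 a + D2 i1 a else D1 i1 a - D2 i0 a.

Lemma key2 (H : Pt R n -> R) (x xi : Pt R n) (e1 e2 : 'rV[R]_2) (D1 D2 : 'M[R]_(4, n)) :
  differentiable H x ->
  Omegah H x xi (e1, e1 i0 i0 *: D1 + e1 i0 i1 *: D2) (e2, e2 i0 i0 *: D1 + e2 i0 i1 *: D2) =
  (e1 i0 i0 * e2 i0 i1 - e2 i0 i0 * e1 i0 i1) *
  \sum_(a < n) \sum_(i < 4) (xi.2 i a - xi.1 i0 i0 * D1 i a - xi.1 i0 i1 * D2 i a) *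
       (Rr D1 D2 i a - 'D_(e_fib i a) H x).
Proof.
move=> dH; rewrite key //; congr (_ * _); apply: eq_bigr => a _.
by rewrite sum4 /Rr eqxx (negbTE n10) (negbTE n20) (negbTE n30) eqxx (negbTE n21)
  (negbTE n31) eqxx (negbTE n32).
Qed.

Lemma collapse (k : 'I_4) (a0 : 'I_n) (D1 D2 : 'M[R]_(4, n)) (G : 'I_4 -> 'I_n -> R) :
  \sum_(a < n) \sum_(i < 4) ((e_fib k a0 : Pt R n).2 i a
     - (e_fib k a0 : Pt R n).1 i0 i0 * D1 i a - (e_fib k a0 : Pt R n).1 i0 i1 * D2 i a) *
       G i a = G k a0.
Proof.
rewrite /e_fib /= exchange_big (bigD1 k) //=.
rewrite [X in _ + X]big1 => [|i /negbTE ne]; last first.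
  by apply: big1 => a _; rewrite !mxE ne /= !mul0r !subr0 mul0r.
rewrite addr0 (bigD1 a0) //= [X in _ + X]big1 => [|a /negbTE ne]; last first.
  by rewrite !mxE ne andbF /= !mul0r !subr0 mul0r.
by rewrite !mxE !eqxx /= !mul0r !subr0 mul1r addr0.
Qed.
End H.

Lemma Dfun_cst_smooth {R : realType} (n : nat) (W : set (Pt R n)) (c : Pt R n) :
  smooth_on W (fun _ : Pt R n => c).
Proof.
move=> k; elim: k c => [|k IH] c /=.
  by move=> x _; exact: cst_continuous.
split; first by move=> x _; exact: differentiable_cst.
move=> v; have -> : (fun x => 'D_v (fun _ : Pt R n => c) x) = (fun _ => 0).
  by apply/funext => x; exact: (derive_cst c x v).
exact: IH.
Qed.

Lemma sum2 {V : zmodType} (F : 'I_2 -> V) : \sum_(i < 2) F i = F i0 + F i1.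
Proof.
rewrite !big_ord_recr big_ord0 /= add0r.
by congr (_ + _); congr F; apply/val_inj; rewrite /= ?inordK.
Qed.

Theorem mainTheorem1 (R : realType) (n : nat) (W : set (Pt R n))
  (U : set 'rV[R]_2) (H : Pt R n -> R) (Q : 'rV[R]_2 -> 'M[R]_(4, n)) :
  open W -> open U -> smooth_on W H -> smooth_on U Q ->
  (forall t, U t -> W (Zsec Q t)) ->
  (is_solution_on W U H (Zsec Q) <->
   forall t, U t -> forall a : 'I_n,
     [/\ 'D_(e_fib i0 a) H (Zsec Q t) =
           - 'D_e_t1 (Qc Q i2 a) t + 'D_e_t2 (Qc Q i3 a) t,
         'D_(e_fib i1 a) H (Zsec Q t) =
           - 'D_e_t1 (Qc Q i3 a) t - 'D_e_t2 (Qc Q i2 a) t,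
         'D_(e_fib i2 a) H (Zsec Q t) =
           'D_e_t1 (Qc Q i0 a) t + 'D_e_t2 (Qc Q i1 a) t
       & 'D_(e_fib i3 a) H (Zsec Q t) =
           'D_e_t1 (Qc Q i1 a) t - 'D_e_t2 (Qc Q i0 a) t]).
Proof.
move=> _ _ sH sQ ZW.
have dHW : forall x, W x -> differentiable H x := (sH 1%N).1.
have dQU : forall t, U t -> differentiable Q t := (sQ 1%N).1.
have DZ : forall t, U t -> forall e : 'rV[R]_2, 'D_e (Zsec Q) t =
    (e, e i0 i0 *: 'D_e_t1 Q t + e i0 i1 *: 'D_e_t2 Q t).
  move=> t Ut e; rewrite /Zsec.
  have did : differentiable (fun y : 'rV[R]_2 => y) t by exact: ex_diff.
  rewrite deriveE; last exact: (differentiable_pair did (dQU t Ut)).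
  rewrite diff_pair //; last exact: dQU.
  have -> : 'd (fun y : 'rV[R]_2 => y) t e = e by rewrite diff_val.
  congr pair; rewrite {1}(row_sum_delta e) linear_sum sum2 !linearZ.
  by rewrite -!deriveE //; apply: dQU.
have DM : forall t, U t -> forall v i a, ('D_v Q t) i a = 'D_v (Qc Q i a) t.
  by move=> t Ut v i a; rewrite derive_mx ?mxE //; apply: diff_derivable; apply: dQU.
split.
- move=> sol t Ut a.
  have Hk : forall k, 'D_(e_fib k a) H (Zsec Q t) = Rr ('D_e_t1 Q t) ('D_e_t2 Q t) k a.
    move=> k; have := sol (fun _ => e_fib k a) (@Dfun_cst_smooth R n W (e_fib k a)) t Ut e_t1 e_t2.
    rewrite /pullback2 /Defs.interior !DZ // key2; last exact: dHW _ (ZW t Ut).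
    have e11 : (e_t1 : 'rV[R]_2) i0 i0 = 1 by rewrite /e_t1 mxE !eqxx.
    have e12 : (e_t1 : 'rV[R]_2) i0 i1 = 0 by rewrite /e_t1 mxE eqxx [i1 == i0](negbTE m10).
    have e21 : (e_t2 : 'rV[R]_2) i0 i0 = 0 by rewrite /e_t2 mxE eqxx eq_sym (negbTE m10).
    have e22 : (e_t2 : 'rV[R]_2) i0 i1 = 1 by rewrite /e_t2 mxE !eqxx.
    have d1 : (e_t1 : 'rV[R]_2) i0 i0 * e_t2 i0 i1 - e_t2 i0 i0 * e_t1 i0 i1 = 1.
      by rewrite e11 e12 e21 e22 mulr1 mul0r subr0.
    have L : forall (d r h : R), d = 1 -> d * (r - h) = 0 -> h = r.
      by move=> d r h -> /eqP; rewrite mul1r subr_eq0 => /eqP.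
    by rewrite collapse; apply: L.
  split.
  + by rewrite (Hk i0) /Rr eqxx !DM.
  + by rewrite (Hk i1) /Rr (negbTE n10) eqxx !DM.
  + by rewrite (Hk i2) /Rr (negbTE n20) (negbTE n21) eqxx !DM.
  + by rewrite (Hk i3) /Rr (negbTE n30) (negbTE n31) (negbTE n32) !DM.
- move=> hyp X _ t Ut e1 e2.
  rewrite /pullback2 /Defs.interior !DZ // key2; last exact: dHW _ (ZW t Ut).
  have Z : forall a i, Rr ('D_e_t1 Q t) ('D_e_t2 Q t) i a - 'D_(e_fib i a) H (Zsec Q t) = 0.
    move=> a i; have [h0 h1 h2 h3] := hyp t Ut a; case: (ord4_cases i) => ->; rewrite /Rr.
    + by rewrite eqxx h0 !DM // subrr.
    + by rewrite (negbTE n10) eqxx h1 !DM // subrr.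
    + by rewrite (negbTE n20) (negbTE n21) eqxx h2 !DM // subrr.
    + by rewrite (negbTE n30) (negbTE n31) (negbTE n32) h3 !DM // subrr.
  rewrite big1 ?mulr0 // => a _; apply: big1 => i _.
  by rewrite Z mulr0.
Qed.
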